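(* Let $p,q\ge0$, $n=p+q\ge1$, $N=2^{\lfloor (n+1)/2\rfloor}$, and let $M\in\mathcal{G}^{\mathbb{C}}_{p,q}$ be normal, i.e. $M^\dagger M=MM^\dagger$. Then ${\rm rank}(M)=N$ if $C_{(N)}(M)\ne0$; for $k\in\{2,\dots,N-1\}$, ${\rm rank}(M)=k$ if $C_{(j)}(M)=0$ for all $j=k+1,\dots,N$ and $C_{(k)}(M)\ne0$; ${\rm rank}(M)=1$ if $C_{(j)}(M)=0$ for all $j=2,\dots,N$ and $M\neq0$; ${\rm rank}(M)=0$ if $M=0$.
   Context: Let $\mathcal{G}_{p,q}$ be the real Clifford algebra with identity $e$ and generators $e_1,\dots,e_n$ satisfying $e_ae_b+e_be_a=2\eta_{ab}e$, $\eta={\rm diag}(1,\dots,1,-1,\dots,-1)$ ($p$ ones, $q$ minus ones), basis elements $e_A=e_{a_1}\cdots e_{a_k}$ for $a_1<\dots<a_k$, and $\mathcal{G}^{\mathbb{C}}_{p,q}=\mathbb{C}\otimes\mathcal{G}_{p,q}$ with elements $M=\sum_A m_Ae_A$, $m_A\in\mathbb{C}$. Hermitian conjugation: $M^\dagger=\sum_A\overline{m_A}(e_A)^{-1}$. Let $\langle M\rangle_0$ denote the coefficient of $e$. Let $\beta$ be an algebra isomorphism from $\mathcal{G}^{\mathbb{C}}_{p,q}$ onto ${\rm Mat}(N,\mathbb{C})$ if $n$ is even, and onto block-diagonal matrices ${\rm diag}(X,Y)$, $X,Y\in{\rm Mat}(N/2,\mathbb{C})$, if $n$ is odd. The rank is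 ${\rm rank}(M):={\rm rank}(\beta(M))$, independent of $\beta$. The characteristic polynomial coefficients $C_{(k)}(M)$ are defined by $\det(\lambda I_N-\beta(M))=\lambda^N-C_{(1)}(M)\lambda^{N-1}-\cdots-C_{(N)}(M)$ (independent of $\beta$); equivalently by the recursion $M_{(1)}=M$, $C_{(k)}=\frac{N}{k}\langle M_{(k)}\rangle_0$, $M_{(k+1)}=M(M_{(k)}-C_{(k)})$, $k=1,\dots,N$. *)

(* Defs.v *)
From HB Require Import structures.
From mathcomp Require Import all_boot all_order all_algebra.
From mathcomp Require Import complex.
From mathcomp Require Import reals.
Set Implicit Arguments.
Unset Strict Implicit.
Unset Printing Implicit Defensive.
Import Order.TTheory GRing.Theory Num.Theory.
Local Open Scope ring_scope.

(* Complexified Clifford algebra G^C_{p,q}: an element M = sum_A m_A e_A is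
   its coefficient function A |-> m_A, A ranging over subsets of
   {0,...,n-1} (n = p+q), generator e_a with a < p squares to +1,
   generator e_a with a >= p squares to -1. *)
Notation cl p q C := {ffun {set 'I_(p + q)} -> C}.

Section Clifford.
Variables (p q : nat) (C : numClosedFieldType).
Local Notation I := ('I_(p + q)).
Local Notation cl := (cl p q C).

(* e_A e_B = cl_sign A B e_{A Delta B}: (-1)^(number of pairs a in A, b in B
   with a > b) times prod_{a in A :&: B} eta_aa. *)
Definition cl_sign (A B : {set I}) : C :=
  (-1) ^+ (#|[set ab : I * I | [&& ab.1 \in A, ab.2 \in B & (ab.2 < ab.1)%N]]|
           + #|[set a in A :&: B | (p <= a)%N]|).

Definition cl_e (A : {set I}) : cl := [ffun B => (B == A)%:R].
Definition cl_one : cl := cl_e set0.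
Definition cl_scal (c : C) : cl := [ffun B => if B == set0 then c else 0].

Definition cl_mul (M N : cl) : cl :=
  [ffun D => \sum_(A : {set I}) \sum_(B : {set I} | (A :\: B) :|: (B :\: A) == D)
                cl_sign A B * M A * N B].

Definition cl_scalar_part (M : cl) : C := M set0.

(* Hermitian conjugation M^dagger = sum_A conj(m_A) (e_A)^{-1};
   since e_A e_A = cl_sign A A e with cl_sign A A = +-1,
   (e_A)^{-1} = cl_sign A A e_A. *)
Definition cl_herm (M : cl) : cl := [ffun A => (M A)^* * cl_sign A A].

Definition cl_normal (M : cl) : Prop := cl_mul (cl_herm M) M = cl_mul M (cl_herm M).

Definition cl_N : nat := 2 ^ (p + q).+1./2.

Fixpoint cl_Mk (M : cl) (k : nat) : cl :=
  match k with
  | 0 => M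
  | k'.+1 =>
      if k' is 0 then M else
      let Mk := cl_Mk M k' in
      cl_mul M [ffun A => Mk A - cl_scal ((cl_N)%:R / k'%:R * cl_scalar_part Mk) A]
  end.

Definition cl_C (M : cl) (k : nat) : C := (cl_N)%:R / k%:R * cl_scalar_part (cl_Mk M k).

Definition cl_block_diag (X : 'M[C]_cl_N) : bool :=
  [forall i : 'I_cl_N, forall j : 'I_cl_N, ((i < cl_N./2)%N != (j < cl_N./2)%N) ==> (X i j == 0)].

Definition is_beta (beta : cl -> 'M[C]_cl_N) : Prop :=
  [/\ forall (a : C) (M N : cl), beta [ffun A => a * M A + N A] = a *: beta M + beta N,
      forall M N : cl, beta (cl_mul M N) = beta M *m beta N,
      beta cl_one = 1%:M,
      injective beta &
      forall X : 'M[C]_cl_N,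
        (exists M : cl, beta M = X) <-> (if odd (p + q) then cl_block_diag X else true)].

End Clifford.

(* Main.v *)
Require Import Defs.
From HB Require Import structures.
From mathcomp Require Import all_boot all_order all_algebra.
From mathcomp Require Import complex.
From mathcomp Require Import reals.
From mathcomp Require Import ring zify.
Import Order.TTheory GRing.Theory Num.Theory.
Local Open Scope ring_scope.
Set Implicit Arguments.
Unset Strict Implicit.
Unset Printing Implicit Defensive.


Section Newton.
Variable C : comRingType.

Fixpoint esym (s : seq C) (j : nat) : C :=
  match s with
  | [::] => (j == 0)%:R
  | y :: s' => esym s' j - y * (if j is j'.+1 then esym s' j' else 0)
  end.

Definition psum (s : seq C) (m : nat) : C := \sum_(x <- s) x ^+ m.

Lemma newton s m :
  \sum_(j < m) esym s j * psum s (m - j) + m%:R * esym s m = 0.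
Proof.
elim: s m => [|y s IH] m.
  rewrite big1 ?add0r => [|j _]; last by rewrite /psum big_nil mulr0.
  by case: m => [|m] /=; rewrite ?mul0r ?mulr0.
case: m => [|k]; first by rewrite big_ord0 mul0r addr0.
have IH1 := IH k.+1; have IH0 := IH k.
rewrite /= /psum.
under eq_bigr do rewrite big_cons.
rewrite -/(psum s _).
under eq_bigr do rewrite -/(psum s _).
have -> : \sum_(j < k.+1) (esym s j - y * (if nat_of_ord j is j'.+1 then esym s j' else 0)) *
      (y ^+ (k.+1 - j) + psum s (k.+1 - j)) =
   \sum_(j < k.+1) esym s j * psum s (k.+1 - j) + \sum_(j < k.+1) esym s j * y ^+ (k.+1 - j)
   - y * \sum_(j < k.+1) (if nat_of_ord j is j'.+1 then esym s j' else 0) * psum s (k.+1 - j)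
   - y * \sum_(j < k.+1) (if nat_of_ord j is j'.+1 then esym s j' else 0) * y ^+ (k.+1 - j).
  rewrite !mulr_sumr -big_split -!sumrB /=; apply: eq_bigr => j _.
  rewrite !mulrA; ring.
have E3 : forall F : nat -> C, \sum_(j < k.+1) (if nat_of_ord j is j'.+1 then esym s j' else 0) * F (k.+1 - j)%N
     = \sum_(j < k) esym s j * F (k - j)%N.
  move=> F; rewrite big_ord_recl /= mul0r add0r.
  by apply: eq_bigr => i _; rewrite /bump /= add1n subSS.
have E2 : \sum_(j < k.+1) esym s j * y ^+ (k.+1 - j) = y * \sum_(i < k) esym s i * y ^+ (k - i) + esym s k * y.
  rewrite big_ord_recr /= subSn // subnn expr1; congr (_ + _).
  rewrite mulr_sumr; apply: eq_bigr => i _ /=.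
  by rewrite subSn ?exprS 1?mulrCA // ltnW.
rewrite (E3 (psum s)) (E3 (fun i => y ^+ i)) E2.
have H1 : \sum_(j < k.+1) esym s j * psum s (k.+1 - j) = - (k.+1%:R * esym s k.+1).
  by apply/eqP; rewrite -addr_eq0 IH1.
have H0 : \sum_(j < k) esym s j * psum s (k - j) = - (k%:R * esym s k).
  by apply/eqP; rewrite -addr_eq0 IH0.
rewrite H1 H0 -[k.+1]addn1 natrD.
ring.
Qed.

End Newton.

Section NZ.
Variable C : idomainType.

Lemma esym_gt (s : seq C) j : (count (fun x : C => x != 0%R) s < j)%N -> esym s j = 0.
Proof.
elim: s j => [|y s IH] j /=; first by case: j.
case: eqP => [->|/eqP ny0] /= Hj.
  by rewrite mul0r subr0 IH.
rewrite IH; last by rewrite (leq_ltn_trans _ Hj) // leq_addl.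
case: j Hj => [//|j] Hj; rewrite IH ?mulr0 ?subr0 //.
Qed.

Lemma esym_count (s : seq C) : esym s (count (fun x : C => x != 0%R) s) != 0.
Proof.
elim: s => [|y s IH] /=; first by rewrite oner_eq0.
case: (eqVneq y 0) => [->|ny0] /=; first by rewrite mul0r subr0 add0n.
rewrite add1n esym_gt ?ltnSn // sub0r oppr_eq0 mulf_neq0 //.
Qed.
End NZ.


Section RankDiag.
Variable F : fieldType.

Lemma rank_diag n (d : 'rV[F]_n) : \rank (diag_mx d) = (\sum_(i < n) (d ord0 i != 0%R))%N.
Proof.
elim: n d => [|n IH] d; first by rewrite big_ord0 thinmx0 mxrank0.
move: d; rewrite -[n.+1]/(1 + n)%N => d.
rewrite -{1}[d]hsubmxK diag_mx_row rank_diag_block_mx IH big_ord_recl.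
congr (_ + _)%N.
  set l := lsubmx d.
  have -> : diag_mx l = l by apply/matrixP => i j; rewrite !ord1 mxE eqxx mulr1n.
  rewrite rank_rV (_ : d ord0 ord0 = l 0 0); last first.
    by rewrite mxE; congr (d _ _); apply: val_inj.
  case: (eqVneq (l 0 0) 0) => H.
    have -> : l = 0 by apply/rowP => j; rewrite ord1 H mxE.
    by rewrite eqxx.
  suff -> : (l != 0) = true by [].
  by apply/negP => /eqP H2; move: H; rewrite H2 mxE eqxx.
apply: eq_bigr => i _; congr (_ != _).
by rewrite mxE; congr (d _ _); apply: val_inj.
Qed.
End RankDiag.

Section DiagCrit.
Variable F : closedFieldType.

Lemma uniq_of_sq (rs : seq F) :
  (forall x, ~~ (('X - x%:P) ^+ 2 %| \prod_(z <- rs) ('X - z%:P))) -> uniq rs.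
Proof.
elim: rs => [//|z rs IH] H /=; apply/andP; split.
  apply/negP => zin; move: (H z); rewrite big_cons expr2 dvdp_mul2l ?polyXsubC_eq0 //.
  by rewrite dvdp_XsubCl root_prod_XsubC zin.
apply: IH => x; apply/negP => Hd; move: (H x); rewrite big_cons.
by rewrite (dvdp_trans Hd) // dvdp_mull.
Qed.

Lemma diag_crit n (A : 'M[F]_n.+1) :
  (forall (x : F) (g : {poly F}), (A - x%:M) *m ((A - x%:M) *m horner_mx A g) = 0 ->
      (A - x%:M) *m horner_mx A g = 0) -> diagonalizable A.
Proof.
move=> Hc.
have [rs Hrs] := closed_field_poly_normal (mxminpoly A).
rewrite (monicP (mxminpoly_monic A)) scale1r in Hrs.
apply/diagonalizableP; exists rs; last by rewrite -Hrs.
apply: uniq_of_sq => x; apply/negP; rewrite -Hrs => /dvdpP [g Hg].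
have HX : horner_mx A ('X - x%:P) = A - x%:M by rewrite rmorphB /= horner_mx_X horner_mx_C.
have Hm : mxminpoly A = ('X - x%:P) * (('X - x%:P) * g) by rewrite Hg expr2 mulrC mulrA.
have H0 : horner_mx A (('X - x%:P) * g) = 0.
  rewrite rmorphM /= HX; apply: Hc.
  have E : horner_mx A (('X - x%:P) * (('X - x%:P) * g)) =
     (A - x%:M) *m ((A - x%:M) *m horner_mx A g) by rewrite !rmorphM /= HX.
  by rewrite -E -Hm mx_root_minpoly.
have hn0 : ('X - x%:P) * g != 0.
  apply/eqP => h0; move: (mxminpoly_monic A); rewrite Hm h0 mulr0.
  by rewrite monicE lead_coef0 eq_sym oner_eq0.
have := dvdp_leq hn0 (mxminpoly_min H0).
rewrite Hm mulrC size_Mmonic ?monicXsubC ?size_XsubC //.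
by rewrite addn2 /= ltnn.
Qed.

Lemma diag_crit_gen n (A : 'M[F]_n) (S : 'M[F]_n -> Prop) :
  S A -> (forall c : F, S (c%:M)) -> (forall X Y, S X -> S Y -> S (X + Y)) ->
  (forall X Y, S X -> S Y -> S (X *m Y)) ->
  (forall (x : F) Z, S Z -> (A - x%:M) *m ((A - x%:M) *m Z) = 0 -> (A - x%:M) *m Z = 0) ->
  diagonalizable A.
Proof.
case: n A S => [|n] A S SA S1 SD SM Hk.
  by rewrite (thinmx0 A); exact: diagonalizable0.
apply: diag_crit => x g; apply: Hk.
elim/poly_ind: g => [|g c Hg].
  rewrite rmorph0 (_ : 0 = (0 : F)%:M) //.
  by apply/matrixP => i j; rewrite !mxE mul0rn.
by rewrite rmorphD rmorphM /= horner_mx_X horner_mx_C; apply: SD => //; apply: SM.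
Qed.
End DiagCrit.


Section Cliff.
Variables (p q : nat) (C : numClosedFieldType).
Local Notation I := ('I_(p + q)).
Local Notation T := (cl p q C).
Local Notation N := (cl_N p q).
Local Notation sg := (@cl_sign p q C).
Local Notation e := (@cl_e p q C).
Local Notation mul := (@cl_mul p q C).

Definition csc (a : C) (M : T) : T := [ffun A => a * M A].
Definition sdiff (A B : {set I}) := (A :\: B) :|: (B :\: A).

Lemma sg_sign A B : exists k, sg A B = (-1) ^+ k.
Proof. by eexists. Qed.

Lemma sgK A B : sg A B * sg A B = 1.
Proof. by rewrite /cl_sign -exprD addnn -mul2n exprM sqrrN expr1n expr1n. Qed.

Lemma sg_conj A B : (sg A B)^* = sg A B.
Proof. by rewrite /cl_sign rmorphXn /= rmorphN1. Qed.

Lemma sg00 : sg set0 set0 = 1.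
Proof.
rewrite /cl_sign (_ : [set ab : I * I | _] = set0); last first.
  by apply/setP => ab; rewrite !inE.
rewrite (_ : [set a in set0 :&: set0 | _] = set0) ?cards0 //.
by apply/setP => a; rewrite !inE.
Qed.

Lemma eE A B : e A B = (B == A)%:R.
Proof. by rewrite ffunE. Qed.

Lemma mul_e A B : mul (e A) (e B) = csc (sg A B) (e (sdiff A B)).
Proof.
apply/ffunP => D; rewrite !ffunE.
rewrite (bigD1 A) //= [X in _ + X]big1 => [|A' nA]; last first.
  by rewrite big1 // => B' _; rewrite eE (negbTE nA) mulr0 mul0r.
rewrite addr0 big_mkcond (bigD1 B) //= [X in _ + X]big1 => [|B' nB]; last first.
  by rewrite [e B B']eE (negbTE nB) mulr0; case: ifP.
rewrite addr0 !eE !eqxx !mulr1 /sdiff eq_sym.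
by case: ifP; rewrite ?mulr1 ?mulr0.
Qed.


Definition lpairs (A B : {set I}) :=
  [set ab : I * I | [&& ab.1 \in A, ab.2 \in B & (ab.2 < ab.1)%N]].

Lemma card_pairs A B :
  (#|lpairs A B| + #|lpairs B A| + #|A :&: B|)%N = (#|A| * #|B|)%N.
Proof.
set S2' := [set ab : I * I | [&& ab.1 \in A, ab.2 \in B & (ab.1 < ab.2)%N]].
set Dg := [set ab : I * I | [&& ab.1 \in A, ab.2 \in B & ab.1 == ab.2]].
have E2 : #|S2'| = #|lpairs B A|.
  rewrite -(@card_preimset _ (fun ab : I * I => (ab.2, ab.1)) (lpairs B A)); last first.
    by move=> [a b] [c d] /= [-> ->].
  by apply: eq_card => -[a b]; rewrite !inE /= andbCA.
have ED : #|Dg| = #|A :&: B|.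
  rewrite -(@card_imset _ _ (fun x : I => (x, x)) (A :&: B)); last by move=> x y [].
  apply: eq_card => -[a b]; rewrite !inE /=.
  apply/idP/imsetP => [/and3P[Ha Hb /eqP Eab]|[x]].
    by exists a; rewrite ?inE ?Ha -?Eab // -Eab in Hb *; rewrite Hb.
  by rewrite inE => /andP[Hx1 Hx2] [-> ->]; rewrite Hx1 Hx2 eqxx.
have HX : setX A B = lpairs A B :|: (S2' :|: Dg).
  apply/setP => [[a b]]; rewrite !inE /= -[a == b](inj_eq val_inj) /=.
  by case: (ltngtP a b) => H; case: (a \in A); case: (b \in B);
    rewrite //= ?(ltn_eqF H) ?(gtn_eqF H) ?H ?eqxx ?orbT.
have D1 : lpairs A B :&: (S2' :|: Dg) = set0.
  apply/setP => [[a b]]; rewrite !inE /= -[a == b](inj_eq val_inj) /=.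
  by case: (ltngtP a b) => H; case: (a \in A); case: (b \in B);
    rewrite //= ?(ltn_eqF H) ?(gtn_eqF H) ?H ?eqxx ?orbT ?ltnn.
have D2 : S2' :&: Dg = set0.
  apply/setP => [[a b]]; rewrite !inE /= -(inj_eq val_inj) /=.
  by case: (ltngtP a b) => H; case: (a \in A); case: (b \in B);
    rewrite //= ?(ltn_eqF H) ?(gtn_eqF H) ?H ?eqxx ?orbT ?ltnn.
have := cardsUI (lpairs A B) (S2' :|: Dg).
rewrite D1 cards0 addn0 -HX cardsX => ->.
have := cardsUI S2' Dg; rewrite D2 cards0 addn0 => ->.
by rewrite E2 ED addnA.
Qed.

Lemma sg_comm A B : sg A B = (-1) ^+ (#|A| * #|B| + #|A :&: B|) * sg B A.
Proof.
rewrite /cl_sign -/(lpairs A B) -/(lpairs B A) -exprD -(card_pairs A B) (setIC B A).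
set k1 := #|lpairs A B|; set k2 := #|lpairs B A|; set c := #|A :&: B|.
set t := #|[set a in A :&: B | _]|.
have -> : (k1 + k2 + c + c + (k2 + t) = (k1 + t) + (k2 + c).*2)%N.
  by rewrite -addnn; lia.
by rewrite [RHS]exprD -mul2n exprM sqrrN expr1n expr1n mulr1.
Qed.


Lemma N_gt0 : (0 < N)%N.
Proof. by rewrite /cl_N expn_gt0. Qed.

Lemma scal1_inj (a b : C) : a *: (1%:M : 'M[C]_N) = b *: 1%:M -> a = b.
Proof.
move/matrixP => /(_ (Ordinal N_gt0) (Ordinal N_gt0)).
by rewrite !mxE eqxx !mulr1n !mulr1.
Qed.

Lemma sdiffC A B : sdiff A B = sdiff B A.
Proof. by rewrite /sdiff setUC. Qed.

Lemma sdiffvv A : sdiff A A = set0.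
Proof. by rewrite /sdiff setDv setU0. Qed.

Lemma sdiff0 A : sdiff set0 A = A.
Proof. by rewrite /sdiff set0D setD0 set0U. Qed.

Lemma sdiff_eq0 A B : (sdiff A B == set0) = (A == B).
Proof.
apply/eqP/eqP => [H|->]; last exact: sdiffvv.
apply/setP => x; move/setP: H => /(_ x).
rewrite /sdiff !inE; by case: (x \in A); case: (x \in B).
Qed.

Lemma sdiffK A B : sdiff A (sdiff A B) = B.
Proof.
apply/setP => x; rewrite /sdiff !inE; by case: (x \in A); case: (x \in B).
Qed.

Variable beta : T -> 'M[C]_N.
Hypothesis Hb : is_beta beta.

Lemma betaL a (M M' : T) : beta [ffun A => a * M A + M' A] = a *: beta M + beta M'.
Proof. by case: Hb. Qed.
Lemma betaM X Y : beta (mul X Y) = beta X *m beta Y.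
Proof. by case: Hb. Qed.
Lemma beta1 : beta (cl_one p q C) = 1%:M.
Proof. by case: Hb. Qed.
Lemma beta_inj : injective beta.
Proof. by case: Hb. Qed.
Lemma beta_img X : (exists M, beta M = X) <-> (if odd (p + q) then cl_block_diag X else true).
Proof. by case: Hb. Qed.

Lemma beta0 : beta 0 = 0.
Proof.
have := betaL 1 0 0.
rewrite (_ : [ffun A => 1 * (0 : T) A + (0 : T) A] = 0); last first.
  by apply/ffunP => A; rewrite !ffunE mul1r addr0.
by rewrite scale1r => /(congr1 (fun x => x - beta 0)); rewrite addrK subrr => ->.
Qed.

Lemma betaD (X Y : T) : beta (X + Y) = beta X + beta Y.
Proof.
rewrite -[beta X]scale1r -betaL; congr beta.
by apply/ffunP => A; rewrite !ffunE mul1r.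
Qed.

Lemma betaZ a (X : T) : beta (csc a X) = a *: beta X.
Proof.
rewrite -[_ *: _]addr0 -beta0 -betaL; congr beta.
by apply/ffunP => A; rewrite !ffunE addr0.
Qed.

Lemma betaN (X : T) : beta (- X) = - beta X.
Proof.
apply/eqP; rewrite -addr_eq0 -betaD addNr beta0 //.
Qed.

Lemma betaB (X Y : T) : beta (X - Y) = beta X - beta Y.
Proof. by rewrite betaD betaN. Qed.

Lemma beta_sum (J : Type) (r : seq J) (P : pred J) (F : J -> T) :
  beta (\sum_(i <- r | P i) F i) = \sum_(i <- r | P i) beta (F i).
Proof. exact: (big_morph _ betaD beta0). Qed.

Lemma cl_expand (X : T) : X = \sum_A csc (X A) (e A).
Proof.
apply/ffunP => D; rewrite sum_ffunE (bigD1 D) //= big1 => [|A nA].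
  by rewrite !ffunE eqxx mulr1 addr0.
by rewrite !ffunE eq_sym (negbTE nA) mulr0.
Qed.

Lemma beta_expand (X : T) : beta X = \sum_A X A *: beta (e A).
Proof.
by rewrite {1}[X]cl_expand beta_sum; apply: eq_bigr => A _; rewrite betaZ.
Qed.

Lemma mulA X Y Z : mul (mul X Y) Z = mul X (mul Y Z).
Proof. by apply: beta_inj; rewrite !betaM mulmxA. Qed.

Lemma mulX0 X : mul X 0 = 0.
Proof. by apply: beta_inj; rewrite betaM beta0 mulmx0. Qed.

Lemma mul0X X : mul 0 X = 0.
Proof. by apply: beta_inj; rewrite betaM beta0 mul0mx. Qed.

Lemma scal_csc c : cl_scal p q c = csc c (cl_one p q C).
Proof.
apply/ffunP => A; rewrite !ffunE.
by case: ifP; rewrite ?mulr1 ?mulr0.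
Qed.

Lemma beta_scal c : beta (cl_scal p q c) = c%:M.
Proof. by rewrite scal_csc betaZ beta1 scalemx1. Qed.

Lemma beta_ee A B : beta (e A) *m beta (e B) = sg A B *: beta (e (sdiff A B)).
Proof. by rewrite -betaM mul_e betaZ. Qed.

Lemma beta_eeK B : beta (e B) *m beta (e B) = sg B B *: 1%:M.
Proof. by rewrite beta_ee sdiffvv -beta1. Qed.

Lemma sg_assoc A B :
  sg A B * sg B A * sg (sdiff A B) (sdiff A B) = sg A A * sg B B.
Proof.
apply: scal1_inj.
have H1 : (beta (e A) *m beta (e B)) *m (beta (e B) *m beta (e A)) =
   (sg A B * sg B A * sg (sdiff A B) (sdiff A B)) *: 1%:M.
  rewrite !beta_ee sdiffC -scalemxAl -scalemxAr beta_eeK.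
  by rewrite !scalerA.
have H2 : (beta (e A) *m beta (e B)) *m (beta (e B) *m beta (e A)) =
   (sg A A * sg B B) *: 1%:M.
  rewrite mulmxA -[_ *m beta (e B) *m beta (e B)]mulmxA beta_eeK.
  by rewrite -scalemxAr mulmx1 -scalemxAl beta_eeK scalerA mulrC.
by rewrite -H1 H2.
Qed.


Lemma tr_anti A B : sg B A = - sg A B -> \tr (beta (e A)) = 0.
Proof.
move=> Hs; set U := beta (e B); set X := beta (e A).
have UX : U *m X = - (X *m U).
  by rewrite /U /X !beta_ee sdiffC Hs scaleNr.
have E := mxtrace_mulC U (U *m X).
rewrite mulmxA beta_eeK -/U UX mulNmx -mulmxA beta_eeK -/U in E.
rewrite -scalemxAr -scalemxAl mul1mx mulmx1 raddfN /= !mxtraceZ in E.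
have E2 : \tr X = - \tr X.
  by have := congr1 (fun z => sg B B * z) E; rewrite mulrA sgK mul1r mulrN mulrA sgK mul1r.
have : \tr X *+ 2 == 0 by rewrite mulr2n {1}E2 addNr.
by rewrite mulrn_eq0 /= => /eqP.
Qed.

Lemma sg_neg_pow k : odd k -> (-1) ^+ k = - 1 :> C.
Proof. by move=> Hk; rewrite -signr_odd Hk expr1. Qed.

Lemma tr_e A : A != set0 -> ~~ ((A == setT) && odd (p + q)) -> \tr (beta (e A)) = 0.
Proof.
move=> nA0 nT.
case Hodd: (odd #|A|).
  have [b Hbn] : exists b, b \notin A.
    apply/existsP; move: nT; apply: contraNT => /existsPn H.
    move: Hodd; have -> : A = setT by apply/setP => b; rewrite inE; move: (H b); rewrite negbK.
    by rewrite eqxx cardsT card_ord => ->.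
  apply: (@tr_anti A [set b]).
  rewrite sg_comm (_ : [set b] :&: A = set0); last first.
    by apply/setP => x; rewrite !inE; case: eqP => // ->; rewrite (negbTE Hbn).
  by rewrite cards1 cards0 mul1n addn0 sg_neg_pow // mulN1r.
have [a Ha] := set0Pn _ nA0.
apply: (@tr_anti A [set a]).
rewrite sg_comm (_ : [set a] :&: A = [set a]); last first.
  by apply/setP => x; rewrite !inE; case: eqP => // ->; rewrite Ha.
by rewrite cards1 mul1n addn1 sg_neg_pow /= ?Hodd // mulN1r.
Qed.

Lemma mulmx_delta_E (Z : 'M[C]_N) (i j k l : 'I_N) : (Z *m delta_mx i j) k l = Z k i * (l == j)%:R.
Proof.
rewrite mxE (bigD1 i) //= big1 ?addr0 => [|m nm]; first by rewrite mxE eqxx.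
by rewrite mxE (negbTE nm) mulr0.
Qed.

Lemma delta_mulmx_E (Z : 'M[C]_N) (i j k l : 'I_N) : (delta_mx i j *m Z) k l = (k == i)%:R * Z j l.
Proof.
rewrite mxE (bigD1 j) //= big1 ?addr0 => [|m nm]; first by rewrite mxE eqxx andbT.
by rewrite mxE (negbTE nm) andbF mul0r.
Qed.

Lemma sum_half (x : C) m h : m = (h + h)%N ->
  \sum_(i < m) (if (i < h)%N then x else - x) = 0.
Proof.
move=> ->; rewrite big_split_ord /=.
under eq_bigr do rewrite ltn_ord.
under [X in _ + X]eq_bigr do rewrite ltnNge leq_addr /=.
by rewrite sumrN subrr.
Qed.

Lemma tr_full : odd (p + q) -> \tr (beta (e setT)) = 0.
Proof.
move=> Hodd; set Z := beta (e setT).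
set h := N./2.
have Nh : N = (h + h)%N.
  rewrite addnn even_halfK // /cl_N oddX /= orbF.
  by move: Hodd; generalize (p + q)%N => m; case: m.
have h0 : (0 < h)%N by move: N_gt0; rewrite Nh; case: (h).
have hN : (h < N)%N by rewrite Nh -addn1 leq_add2l.
have Hc B : sg setT B = sg B setT.
  rewrite sg_comm setTI cardsT card_ord -{2}[#|B|]mul1n -mulnDl.
  rewrite -signr_odd oddM oddD Hodd /= expr0 mul1r //.
have ZB B : Z *m beta (e B) = beta (e B) *m Z.
  by rewrite /Z !beta_ee sdiffC Hc.
have ZX X : Z *m beta X = beta X *m Z.
  rewrite beta_expand mulmx_sumr mulmx_suml; apply: eq_bigr => B _.
  by rewrite -scalemxAr -scalemxAl ZB.
have ZW W : cl_block_diag W -> Z *m W = W *m Z.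
  move=> HW; have [X <-] : exists X, beta X = W by apply/(beta_img W); rewrite Hodd.
  exact: ZX.
have Bd (i j : 'I_N) : (i < h)%N = (j < h)%N -> cl_block_diag (delta_mx i j : 'M[C]_N).
  move=> Hij; apply/forallP => k; apply/forallP => l; apply/implyP => Hkl.
  rewrite mxE; case: (eqVneq k i) => [Eki|]; case: (eqVneq l j) => [Elj|] //=.
  by move: Hkl; rewrite Eki Elj -/h Hij eqxx.
have Zd (k i : 'I_N) : k != i -> Z k i = 0.
  move=> nki; have := congr1 (fun W : 'M[C]_N => W k i) (ZW _ (Bd i i erefl)).
  by rewrite mulmx_delta_E delta_mulmx_E eqxx (negbTE nki) mulr1 mul0r.
have Zeq (i j : 'I_N) : (i < h)%N = (j < h)%N -> Z i i = Z j j.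
  move=> Hij; have := congr1 (fun W : 'M[C]_N => W i j) (ZW _ (Bd i j Hij)).
  by rewrite mulmx_delta_E delta_mulmx_E !eqxx mulr1 mul1r.
set i0 := Ordinal N_gt0; set j0 := Ordinal hN.
set x := Z i0 i0; set y := Z j0 j0.
have Zi (i : 'I_N) : Z i i = if (i < h)%N then x else y.
  case: ifP => Hi; first by apply: Zeq; rewrite Hi /= h0.
  by apply: Zeq; rewrite Hi /= ltnn.
have Zsq (i : 'I_N) : Z i i * Z i i = sg setT setT.
  have := congr1 (fun W : 'M[C]_N => W i i) (beta_eeK setT); rewrite -/Z !mxE eqxx mulr1n mulr1.
  move=> <-; rewrite (bigD1 i) //= big1 ?addr0 // => m nm.
  by rewrite Zd ?mul0r // eq_sym.
have nxy : x != y.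
  apply/eqP => Exy.
  have HZ : Z = beta (cl_scal p q x).
    rewrite beta_scal; apply/matrixP => k l; rewrite mxE.
    case: (eqVneq k l) => [->|nkl]; last by rewrite Zd.
    by rewrite Zi -Exy mulr1n; case: ifP.
  have := congr1 (fun W : T => W setT) (beta_inj HZ).
  rewrite !ffunE eqxx.
  case: ifP => [/eqP HT|_]; last by move/eqP; rewrite oner_eq0.
  have np : (0 < p + q)%N by move: Hodd; generalize (p + q)%N => m; case: m.
  by have := in_setT (Ordinal np); rewrite HT inE.
have yx : y = - x.
  have Hsq : (x - y) * (x + y) = 0.
    have := Zsq i0; have := Zsq j0; rewrite -/x -/y => E1 E2.
    by rewrite mulrDr !mulrBl E1 E2 [y * x]mulrC addrA subrK subrr.
  move/eqP: Hsq; rewrite mulf_eq0 subr_eq0 (negbTE nxy) /= addrC addr_eq0.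
  by move/eqP.
rewrite /mxtrace (eq_bigr (fun i : 'I_N => if (i < h)%N then x else - x)).
  exact: sum_half Nh.
by move=> i _; rewrite Zi yx.
Qed.

Lemma tr_beta (X : T) : \tr (beta X) = N%:R * X set0.
Proof.
rewrite beta_expand raddf_sum (bigD1 set0) //= big1.
  by rewrite addr0 mxtraceZ -/(cl_one p q C) beta1 mxtrace1 mulrC.
move=> A nA; rewrite mxtraceZ.
case HT: ((A == setT) && odd (p + q)).
  by move/andP: HT => [/eqP -> Ho]; rewrite tr_full ?mulr0.
by rewrite tr_e ?mulr0 ?HT.
Qed.



Local Notation herm := (@cl_herm p q C).

Lemma hermD (X Y : T) : herm (X + Y) = herm X + herm Y.
Proof. by apply/ffunP => A; rewrite !ffunE rmorphD mulrDl. Qed.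

Lemma herm0 : herm 0 = 0.
Proof. by apply/ffunP => A; rewrite !ffunE rmorph0 mul0r. Qed.

Lemma hermZ a (X : T) : herm (csc a X) = csc a^* (herm X).
Proof. by apply/ffunP => A; rewrite !ffunE rmorphM mulrA. Qed.

Lemma herm_sum (J : Type) (r : seq J) (F : J -> T) :
  herm (\sum_(i <- r) F i) = \sum_(i <- r) herm (F i).
Proof. exact: (big_morph _ hermD herm0). Qed.

Lemma herm_e A : herm (e A) = csc (sg A A) (e A).
Proof.
apply/ffunP => B; rewrite !ffunE; case: eqVneq => [->|_].
  by rewrite rmorph1 mul1r mulr1.
by rewrite rmorph0 !mul0r mulr0.
Qed.

Lemma herm_herm (X : T) : herm (herm X) = X.
Proof.
by apply/ffunP => A; rewrite !ffunE rmorphM /= conjCK sg_conj -mulrA sgK mulr1.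
Qed.

Lemma cscA a b (X : T) : csc a (csc b X) = csc (a * b) X.
Proof. by apply/ffunP => A; rewrite !ffunE mulrA. Qed.

Lemma mul_suml (J : Type) (r : seq J) (F : J -> T) Y :
  mul (\sum_(i <- r) F i) Y = \sum_(i <- r) mul (F i) Y.
Proof.
apply: beta_inj; rewrite betaM !beta_sum mulmx_suml.
by apply: eq_bigr => i _; rewrite betaM.
Qed.

Lemma mul_sumr (J : Type) (r : seq J) (F : J -> T) X :
  mul X (\sum_(i <- r) F i) = \sum_(i <- r) mul X (F i).
Proof.
apply: beta_inj; rewrite betaM !beta_sum mulmx_sumr.
by apply: eq_bigr => i _; rewrite betaM.
Qed.

Lemma mul_cscl a (X Y : T) : mul (csc a X) Y = csc a (mul X Y).
Proof. by apply: beta_inj; rewrite betaM !betaZ betaM scalemxAl. Qed.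

Lemma mul_cscr a (X Y : T) : mul X (csc a Y) = csc a (mul X Y).
Proof. by apply: beta_inj; rewrite betaM !betaZ betaM scalemxAr. Qed.

Lemma herm_ee A B : herm (mul (e A) (e B)) = mul (herm (e B)) (herm (e A)).
Proof.
rewrite !herm_e mul_cscl mul_cscr !mul_e hermZ herm_e sg_conj !cscA sdiffC.
congr csc.
have := sg_assoc A B; rewrite sdiffC => H.
rewrite -[sg A B]mulr1 -(sgK B A) mulrA -mulrA [sg B A * _]mulrC mulrA H.
by rewrite [sg A A * _]mulrC.
Qed.

Lemma mul_expand (X Y : T) :
  mul X Y = \sum_A \sum_B csc (X A * Y B) (mul (e A) (e B)).
Proof.
rewrite {1}[X]cl_expand mul_suml; apply: eq_bigr => A _.
rewrite {1}[Y]cl_expand mul_sumr; apply: eq_bigr => B _.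
by rewrite mul_cscl mul_cscr cscA.
Qed.

Lemma herm_expand (X : T) : herm X = \sum_A csc (X A)^* (herm (e A)).
Proof. by rewrite {1}[X]cl_expand herm_sum; apply: eq_bigr => A _; rewrite hermZ. Qed.

Lemma herm_mul (X Y : T) : herm (mul X Y) = mul (herm Y) (herm X).
Proof.
rewrite mul_expand herm_sum.
rewrite (herm_expand Y) (herm_expand X) mul_suml.
under [RHS]eq_bigr do rewrite mul_sumr.
rewrite [RHS]exchange_big /=.
apply: eq_bigr => A _; rewrite herm_sum; apply: eq_bigr => B _.
by rewrite hermZ herm_ee mul_cscl mul_cscr cscA rmorphM mulrC.
Qed.

Lemma inner_E (U : T) : (mul (herm U) U) set0 = \sum_A (U A)^* * U A.
Proof.
rewrite ffunE; apply: eq_bigr => A _.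
rewrite (eq_bigl (pred1 A)) => [|B]; last by rewrite /= -/(sdiff A B) sdiff_eq0 eq_sym.
by rewrite big_pred1_eq ffunE mulrCA sgK mulr1.
Qed.

Lemma inner0 (U : T) : (mul (herm U) U) set0 = 0 -> U = 0.
Proof.
rewrite inner_E => H; apply/ffunP => A; rewrite ffunE.
have H0 : forall B, predT B -> 0 <= (U B)^* * U B.
  by move=> B _; rewrite -normCKC exprn_ge0.
have /eqP := @psumr_eq0P _ _ _ _ H0 H A isT.
by rewrite mulrC mul_conjC_eq0 => /eqP.
Qed.


Lemma normal_ker (Tm Y : T) : mul (herm Tm) Tm = mul Tm (herm Tm) ->
  mul Tm (mul Tm Y) = 0 -> mul Tm Y = 0.
Proof.
move=> Hn H; set Z := mul Tm Y.
have HZ : mul (herm Tm) Z = 0.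
  apply: inner0; rewrite herm_mul herm_herm mulA -[mul Tm (mul (herm Tm) Z)]mulA -Hn.
  by rewrite [mul (mul (herm Tm) Tm) Z]mulA -/Z H !mulX0 ffunE.
apply: inner0.
by rewrite {1}/Z herm_mul mulA HZ mulX0 ffunE.
Qed.

Lemma herm_scal c : herm (cl_scal p q c) = cl_scal p q c^*.
Proof.
apply/ffunP => A; rewrite !ffunE; case: eqVneq => [->|_].
  by rewrite sg00 mulr1.
by rewrite rmorph0 mul0r.
Qed.

Lemma hermN (X : T) : herm (- X) = - herm X.
Proof. by apply/ffunP => A; rewrite !ffunE rmorphN mulNr. Qed.

Lemma normal_shift M c : cl_normal M ->
  mul (herm (M - cl_scal p q c)) (M - cl_scal p q c) =
  mul (M - cl_scal p q c) (herm (M - cl_scal p q c)).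
Proof.
rewrite /cl_normal => Hn; have Hn' := congr1 beta Hn; rewrite !betaM in Hn'.
apply: beta_inj; rewrite !betaM hermD hermN herm_scal !betaB !beta_scal.
rewrite !mulmxBl !mulmxBr Hn' !mul_mx_scalar !mul_scalar_mx.
rewrite !scale_scalar_mx mulrC !opprB -!addrA; congr (_ + _).
by rewrite addrCA [in RHS]addrCA; congr (_ + _); exact: addrC.
Qed.

Lemma beta_diag M : cl_normal M -> diagonalizable (beta M).
Proof.
move=> Hn; apply: (@diag_crit_gen _ _ _ (fun W => exists Y, beta Y = W)).
- by exists M.
- by move=> c; exists (cl_scal p q c); rewrite beta_scal.
- by move=> X Y [X' <-] [Y' <-]; exists (X' + Y'); rewrite betaD.
- by move=> X Y [X' <-] [Y' <-]; exists (mul X' Y'); rewrite betaM.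
move=> x Z [Y <-].
have HT : beta (M - cl_scal p q x) = beta M - x%:M by rewrite betaB beta_scal.
rewrite -HT -!betaM -beta0 => /beta_inj H.
by rewrite (normal_ker (normal_shift x Hn) H).
Qed.


Lemma sum_count (J : eqType) (r : seq J) (b : pred J) :
  (\sum_(i <- r) (b i : nat))%N = count b r.
Proof. by elim: r => [|x r IH]; rewrite ?big_nil ?big_cons ?IH. Qed.

Lemma esym0 (s : seq C) : esym s 0 = 1.
Proof. by elim: s => [|y s IH] //=; rewrite IH mulr0 subr0. Qed.

Section Main.
Variable M : T.
Variables (P : 'M[C]_N) (d : 'rV[C]_N).
Hypotheses (HP : P \in unitmx) (HA : beta M = invmx P *m diag_mx d *m P).

Let s := [seq d 0 i | i <- index_enum 'I_N].
Let es k := esym s k.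
Let G k : 'rV[C]_N := \row_i \sum_(j < k) es j * d 0 i ^+ (k - j).

Lemma psum_s m : psum s m = \sum_i d 0 i ^+ m.
Proof. by rewrite /psum big_map. Qed.

Lemma tr_G k : \tr (diag_mx (G k)) = - (k%:R * es k).
Proof.
rewrite mxtrace_diag.
under eq_bigr do rewrite mxE.
rewrite exchange_big /=.
have := newton s k; rewrite -/es => /eqP; rewrite addr_eq0 => /eqP <-.
by apply: eq_bigr => j _; rewrite psum_s mulr_sumr.
Qed.

Lemma tr_conj X : \tr (invmx P *m X *m P) = \tr X.
Proof. by rewrite mxtrace_mulC mulmxA mulmxV // mul1mx. Qed.

Lemma conjM X Y : (invmx P *m X *m P) *m (invmx P *m Y *m P) = invmx P *m (X *m Y) *m P.
Proof. by rewrite !mulmxA mulmxK // -[invmx P *m X *m Y]mulmxA. Qed.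

Lemma conjS X c : invmx P *m X *m P - c%:M = invmx P *m (X - c%:M) *m P.
Proof.
by rewrite mulmxBr mulmxBl mul_mx_scalar -scalemxAl mulVmx // scalemx1.
Qed.

Lemma N_neq0 : (N%:R : C) != 0.
Proof. by rewrite pnatr_eq0 -lt0n N_gt0. Qed.

Lemma c_of k : (0 < k)%N -> beta (cl_Mk M k) = invmx P *m diag_mx (G k) *m P ->
  N%:R / k%:R * (cl_Mk M k) set0 = - es k.
Proof.
move=> k0 Hk.
have := tr_beta (cl_Mk M k); rewrite Hk tr_conj tr_G => E.
rewrite mulrAC -E mulNr mulrC mulKf // pnatr_eq0 -lt0n //.
Qed.

Lemma Mk_eq k : (0 < k)%N -> beta (cl_Mk M k) = invmx P *m diag_mx (G k) *m P.
Proof.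
elim: k => [//|k IH] _.
case: k IH => [|k] IH.
  rewrite /= HA; congr (_ *m diag_mx _ *m _); apply/rowP => i.
  by rewrite mxE big_ord1 subn0 expr1 /es esym0 mul1r.
have IHk := IH isT; have Hc := @c_of k.+1 isT IHk.
have -> : cl_Mk M k.+2 = mul M (cl_Mk M k.+1 - cl_scal p q (N%:R / k.+1%:R * cl_scalar_part (cl_Mk M k.+1))).
  have -> : cl_Mk M k.+2 = mul M [ffun A => cl_Mk M k.+1 A - cl_scal p q (N%:R / k.+1%:R * cl_scalar_part (cl_Mk M k.+1)) A] by [].
  by congr mul; apply/ffunP => A; rewrite !ffunE.
rewrite betaM betaB beta_scal IHk /cl_scalar_part Hc HA conjS conjM.
congr (_ *m _ *m _); rewrite mul_diag_mx; apply/matrixP => i j; rewrite !mxE.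
case: (eqVneq i j) => [->|nij]; last by rewrite !mulr0n subrr mulr0.
rewrite !mulr1n opprK [RHS]big_ord_recr /= subSn // subnn expr1.
rewrite mulrDr mulr_sumr [es k.+1 * _]mulrC; congr (_ + _).
apply: eq_bigr => j' _ /=; rewrite (@subSn j' k.+1); last exact: ltnW (ltn_ord j').
by rewrite exprS mulrCA.
Qed.

Lemma C_eq k : (0 < k)%N -> cl_C M k = - es k.
Proof. by move=> k0; rewrite /cl_C /cl_scalar_part (c_of k0 (Mk_eq k0)). Qed.

Lemma rank_eq : \rank (beta M) = count (fun x : C => x != 0%R) s.
Proof.
rewrite HA mxrankMfree ?row_free_unit // -mxrank_tr trmx_mul mxrankMfree.
  by rewrite mxrank_tr rank_diag count_map -sum_count.
by rewrite row_free_unit unitmx_tr unitmx_inv.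
Qed.

Lemma count_le : (count (fun x : C => x != 0%R) s <= N)%N.
Proof.
rewrite (leq_trans (count_size _ _)) // size_map -(filter_predT (index_enum _)).
by rewrite deprecated_filter_index_enum -cardE card_ord.
Qed.

End Main.

Lemma main_lemma M : cl_normal M ->
    [/\ cl_C M N != 0 -> \rank (beta M) = N,
        forall k : nat, (2 <= k <= N.-1)%N ->
          (forall j : nat, (k < j <= N)%N -> cl_C M j = 0) ->
          cl_C M k != 0 -> \rank (beta M) = k,
        (forall j : nat, (2 <= j <= N)%N -> cl_C M j = 0) ->
          M != 0 -> \rank (beta M) = 1%N &
        M = 0 -> \rank (beta M) = 0%N].
Proof.
move=> HM.
have [P Punit /(similar_diagLR Punit) [d Hd]] := beta_diag HM.
rewrite conjumx ?unitmx_inv // invmxK in Hd.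
have Hr := rank_eq Punit Hd; have Hle := count_le d.
have HC := C_eq Punit Hd.
set r := count _ _ in Hr Hle.
have Hgt j : (r < j)%N -> esym [seq d 0 i | i <- index_enum 'I_N] j = 0 by move=> ?; apply: esym_gt.
have Hr0 : esym [seq d 0 i | i <- index_enum 'I_N] r != 0 by apply: esym_count.
split.
- move=> HN; rewrite Hr; apply/eqP; rewrite eqn_leq Hle /=.
  rewrite leqNgt; apply/negP => /Hgt H; move: HN; rewrite HC ?N_gt0 // H oppr0 eqxx => /negP H0; exact: H0.
- move=> k /andP[k2 kN] Hj Hk; rewrite Hr.
  have k0 : (0 < k)%N by apply: leq_trans k2.
  have kr : (k <= r)%N.
    rewrite leqNgt; apply/negP => /Hgt H; move: Hk; rewrite HC // H oppr0 eqxx => /negP H0; exact: H0.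
  apply/eqP; rewrite eqn_leq kr andbT leqNgt; apply/negP => kr'.
  have r0 : (0 < r)%N by apply: leq_ltn_trans kr'.
  have := Hj r; rewrite kr' Hle => /(_ isT) /eqP; rewrite HC // oppr_eq0.
  by rewrite (negbTE Hr0).
- move=> Hj nM; rewrite Hr.
  case: r Hr Hle Hr0 {Hgt} => [|[//|r]] Hr Hle Hr0.
    move/eqP: Hr; rewrite mxrank_eq0 -beta0 => /eqP /beta_inj Hm.
    by move: nM; rewrite Hm eqxx.
  have := Hj r.+2; rewrite Hle /= => /(_ isT) /eqP; rewrite HC // oppr_eq0.
  by rewrite (negbTE Hr0).
- by move=> ->; rewrite beta0 mxrank0.
Qed.

End Cliff.

Unset Implicit Arguments.

Theorem theorem5 (R : realType) (p q : nat) (M : cl p q R[i]) :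
  (1 <= p + q)%N ->
  cl_normal M ->
  forall beta : cl p q R[i] -> 'M[R[i]]_(cl_N p q),
    is_beta beta ->
    [/\ cl_C M (cl_N p q) != 0 -> \rank (beta M) = cl_N p q,
        forall k : nat, (2 <= k <= (cl_N p q).-1)%N ->
          (forall j : nat, (k < j <= cl_N p q)%N -> cl_C M j = 0) ->
          cl_C M k != 0 -> \rank (beta M) = k,
        (forall j : nat, (2 <= j <= cl_N p q)%N -> cl_C M j = 0) ->
          M != 0 -> \rank (beta M) = 1%N &
        M = 0 -> \rank (beta M) = 0%N].
Proof.
move=> _ HM beta Hb.
exact: (main_lemma Hb HM).
Qed.
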